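(* Let $0<\alpha<1$ and $\gamma>0$, and for $j\in\mathbb{Z}_{\ge0}$ let $F_j={}_2F_1(\gamma,j\gamma;1+j\gamma;\alpha)$. Then (1) $F_0=1$; (2) $F_{j+1}>F_j$ for all $j\ge0$; (3) $F_j<(1-\alpha)^{-\gamma}$ for all $j\ge0$.
   Context: ${}_2F_1(a,b;c;z)=\sum_{k\ge0}\frac{(a)_k(b)_k}{k!(c)_k}z^k$ is the Gauss hypergeometric function, $(a)_k$ the Pochhammer symbol. *)

(* Defs.v *)
From Stdlib Require Import Reals Arith Factorial.
From Coquelicot Require Import Coquelicot.
Open Scope R_scope.

Fixpoint pochhammer (a : R) (k : nat) : R :=
  match k with
  | O => 1
  | S k' => pochhammer a k' * (a + INR k')
  end.

Definition hyp2F1_term (a b c z : R) (k : nat) : R :=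
  pochhammer a k * pochhammer b k / (INR (fact k) * pochhammer c k) * z ^ k.

(* Gauss hypergeometric function 2F1(a,b;c;z) as the sum of the series
   (Coquelicot's total Series; the series converges for |z| < 1 when c is
   not a nonpositive integer). *)
Definition hyp2F1 (a b c z : R) : R := Series (hyp2F1_term a b c z).

(* Main.v *)
Require Import Defs.
From Stdlib Require Import Reals Lra Lia Arith Factorial.
From Coquelicot Require Import Coquelicot.
Open Scope R_scope.

Definition aa (g : R) (k : nat) : R := pochhammer g k / INR (fact k).

Fixpoint Sp (g : R) (n : nat) (x : R) : R :=
  match n with
  | O => aa g 0 * x ^ 0
  | S m => Sp g m x + aa g (S m) * x ^ (S m)
  end.

Fixpoint Dp (g : R) (n : nat) (x : R) : R :=
  match n with
  | O => 0
  | S m => Dp g m x + aa g m * (g + INR m) * x ^ m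
  end.

Lemma poch_pos (b : R) (k : nat) : 0 < b -> 0 < pochhammer b k.
Proof.
  intros Hb; induction k as [|k IH]; cbn [pochhammer]; [lra|].
  apply Rmult_lt_0_compat; [exact IH|]. pose proof (pos_INR k); lra.
Qed.

Lemma aa_pos (g : R) (k : nat) : 0 < g -> 0 < aa g k.
Proof.
  intros Hg. unfold aa. apply Rdiv_lt_0_compat; [apply poch_pos; lra| apply INR_fact_lt_0].
Qed.

Lemma aa0 g : aa g 0 = 1.
Proof. unfold aa; simpl; field. Qed.

Lemma aa_succ (g : R) (k : nat) : aa g (S k) * INR (S k) = aa g k * (g + INR k).
Proof.
  unfold aa. cbn [pochhammer]. rewrite fact_simpl, mult_INR.
  pose proof (INR_fact_lt_0 k). pose proof (pos_INR k). rewrite S_INR.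
  field. lra.
Qed.

Lemma deriv_Sp (g : R) (n : nat) (x : R) : is_derive (Sp g n) x (Dp g n x).
Proof.
  induction n as [|m IH].
  - change (is_derive (fun y => aa g 0 * y ^ 0) x 0). auto_derive; auto. ring.
  - change (is_derive (fun y => Sp g m y + aa g (S m) * y ^ (S m)) x
              (Dp g m x + aa g m * (g + INR m) * x ^ m)).
    replace (Dp g m x + aa g m * (g + INR m) * x ^ m)
      with (plus (Dp g m x) (aa g (S m) * (INR (S m) * 1 * x ^ m))).
    + apply (is_derive_plus (Sp g m) (fun y => aa g (S m) * y ^ (S m))); [exact IH|]. auto_derive; auto. simpl; ring.
    + rewrite <- aa_succ. unfold plus; simpl. ring.
Qed.

Lemma ident (g : R) (n : nat) (x : R) :
  (1 - x) * Dp g n x - g * Sp g n x = - (g + INR n) * aa g n * x ^ n.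
Proof.
  induction n as [|m IH].
  - simpl. ring.
  - cbn [Sp Dp].
    transitivity ((1 - x) * Dp g m x - g * Sp g m x
                  + (1 - x) * (aa g m * (g + INR m)) * x ^ m
                  - g * (aa g (S m) * x ^ (S m))); [ring|].
    rewrite IH. cbn [pow].
    transitivity (-(x * x ^ m) * (aa g m * (g + INR m)) - g * (aa g (S m) * (x * x ^ m))); [ring|].
    rewrite <- aa_succ, S_INR. ring.
Qed.

Lemma Sp0 g n : Sp g n 0 = 1.
Proof.
  induction n as [|m IH]; cbn [Sp]; [rewrite aa0; simpl; ring|].
  rewrite IH. simpl. ring.
Qed.

Lemma Sp_bound (g al : R) (n : nat) : 0 < al < 1 -> 0 < g ->
  Sp g n al <= Rpower (1 - al) (- g).
Proof.
  intros Hal Hg.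
  set (G := fun y => exp (g * ln (1 - y)) * Sp g n y).
  set (dG := fun y => exp (g * ln (1 - y)) / (1 - y) * ((1 - y) * Dp g n y - g * Sp g n y)).
  assert (HD : forall y, y < 1 -> is_derive G y (dG y)).
  { intros y Hy.
    assert (H1 : is_derive (fun z => exp (g * ln (1 - z))) y
                   (exp (g * ln (1 - y)) * (g * (-1 / (1 - y))))).
    { auto_derive; [lra|]. replace (1 + - y) with (1 - y) by ring. field. lra. }
    pose proof (is_derive_mult _ _ y _ _ H1 (deriv_Sp g n y) Rmult_comm) as H2.
    unfold G, dG.
    replace (exp (g * ln (1 - y)) / (1 - y) * ((1 - y) * Dp g n y - g * Sp g n y))
      with (plus (mult (exp (g * ln (1 - y)) * (g * (-1 / (1 - y)))) (Sp g n y))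
                 (mult (exp (g * ln (1 - y))) (Dp g n y))).
    - exact H2.
    - unfold plus, mult; simpl. field. lra. }
  destruct (MVT_gen G 0 al dG) as [c [Hc Heq]].
  - intros y Hy. apply HD. rewrite Rmax_right in Hy; lra.
  - intros y Hy. rewrite Rmax_right in Hy; [|lra].
    apply continuity_pt_filterlim. apply (ex_derive_continuous (K:=R_AbsRing) (V:=R_NormedModule) G).
    eexists. apply HD. lra.
  - rewrite Rmin_left in Hc; [|lra]. rewrite Rmax_right in Hc; [|lra].
    assert (HdG : dG c <= 0).
    { unfold dG. rewrite ident.
      assert (0 < exp (g * ln (1 - c)) / (1 - c)).
      { apply Rdiv_lt_0_compat; [apply exp_pos| lra]. }
      assert (0 <= (g + INR n) * aa g n * c ^ n).
      { apply Rmult_le_pos; [apply Rmult_le_pos|].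
        - pose proof (pos_INR n); lra.
        - pose proof (aa_pos g n Hg); lra.
        - apply pow_le; lra. }
      nra. }
    assert (HG0 : G 0 = 1).
    { unfold G. rewrite Sp0. replace (1 - 0) with 1 by ring. rewrite ln_1.
      replace (g * 0) with 0 by ring. rewrite exp_0. ring. }
    assert (HGa : G al <= 1) by nra.
    unfold G in HGa. unfold Rpower.
    set (E := exp (g * ln (1 - al))) in *.
    assert (HE : 0 < E) by apply exp_pos.
    assert (HEE : E * exp (- g * ln (1 - al)) = 1).
    { unfold E. rewrite <- exp_plus. replace (g * ln (1 - al) + - g * ln (1 - al)) with 0 by ring.
      apply exp_0. }
    apply Rmult_le_reg_l with E; [exact HE|]. rewrite HEE. exact HGa.
Qed.

Lemma poch_shift (b : R) (k : nat) :
  pochhammer b k * (b + INR k) = b * pochhammer (1 + b) k.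
Proof.
  induction k as [|k IH].
  - cbn [pochhammer INR]. ring.
  - cbn [pochhammer]. rewrite S_INR.
    transitivity (pochhammer b k * (b + INR k) * (b + (INR k + 1))); [ring|].
    rewrite IH. ring.
Qed.

Section Main.
Variables (g al : R).
Hypothesis Hal : 0 < al < 1.
Hypothesis Hg : 0 < g.

Definition cc (k : nat) := aa g k * al ^ k.

Lemma cc_pos k : 0 < cc k.
Proof. unfold cc. apply Rmult_lt_0_compat; [apply aa_pos; lra| apply pow_lt; lra]. Qed.

Lemma cc0 : cc 0 = 1.
Proof. unfold cc. rewrite aa0. simpl; ring. Qed.

Lemma term0 b : hyp2F1_term g b (1 + b) al 0 = 1.
Proof. unfold hyp2F1_term. simpl. field. Qed.

Lemma termS b m : 0 <= b ->
  hyp2F1_term g b (1 + b) al (S m) = cc (S m) * (b / (b + INR (S m))).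
Proof.
  intros Hb. pose proof (poch_shift b (S m)) as Hs.
  assert (HP : 0 < pochhammer (1 + b) (S m)) by (apply poch_pos; lra).
  assert (Hk : 0 < INR (S m)) by (apply lt_0_INR; lia).
  assert (Hpb : pochhammer b (S m) = b * pochhammer (1 + b) (S m) / (b + INR (S m))).
  { rewrite <- Hs. field. lra. }
  unfold hyp2F1_term, cc, aa. rewrite Hpb.
  pose proof (INR_fact_lt_0 (S m)).
  field. repeat split; lra.
Qed.

Lemma frac_bounds b k : 0 <= b -> 0 < k -> 0 <= b / (b + k) < 1.
Proof.
  intros Hb Hk. split.
  - apply Rmult_le_pos; [lra|]. left; apply Rinv_0_lt_compat; lra.
  - apply Rmult_lt_reg_r with (b + k); [lra|].
    unfold Rdiv. rewrite Rmult_assoc, Rinv_l; lra.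
Qed.

Lemma frac_mono b b' k : 0 <= b -> b < b' -> 0 < k -> b / (b + k) < b' / (b' + k).
Proof.
  intros Hb Hbb Hk.
  assert (H : b' / (b' + k) - b / (b + k) = (k * (b' - b)) / ((b + k) * (b' + k)))
    by (field; lra).
  assert (0 < (k * (b' - b)) / ((b + k) * (b' + k))).
  { apply Rdiv_lt_0_compat; apply Rmult_lt_0_compat; lra. }
  lra.
Qed.

Definition tt (j : nat) := hyp2F1_term g (INR j * g) (1 + INR j * g) al.

Lemma bj_nonneg j : 0 <= INR j * g.
Proof. apply Rmult_le_pos; [apply pos_INR| lra]. Qed.

Lemma tt_bounds j k : 0 <= tt j k <= cc k.
Proof.
  unfold tt. destruct k as [|m].
  - rewrite term0, cc0. lra.
  - rewrite termS by apply bj_nonneg.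
    pose proof (cc_pos (S m)).
    assert (Hk : 0 < INR (S m)) by (apply lt_0_INR; lia).
    destruct (frac_bounds (INR j * g) (INR (S m)) (bj_nonneg j) Hk).
    split; nra.
Qed.

Lemma sum_cc n : sum_n cc n = Sp g n al.
Proof.
  induction n as [|n IH]; [rewrite sum_O; reflexivity|].
  rewrite sum_Sn, IH. reflexivity.
Qed.

Lemma ex_cc : ex_series cc.
Proof.
  destruct (ex_finite_lim_seq_incr (sum_n cc) (Rpower (1 - al) (- g))) as [l Hl].
  - intros n. rewrite sum_Sn. unfold plus; simpl. pose proof (cc_pos (S n)). lra.
  - intros n. rewrite sum_cc. apply Sp_bound; lra.
  - exists l. exact Hl.
Qed.

Lemma Series_cc_le : Series cc <= Rpower (1 - al) (- g).
Proof.
  pose proof (Series_correct _ ex_cc) as H.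
  assert (H' : is_lim_seq (sum_n cc) (Series cc)) by exact H.
  pose proof (is_lim_seq_le _ _ _ _ (fun n => ltac:(rewrite sum_cc; apply Sp_bound; lra))
                H' (is_lim_seq_const (Rpower (1 - al) (- g)))) as H2.
  exact H2.
Qed.

Lemma ex_tt j : ex_series (tt j).
Proof.
  apply (ex_series_le (K:=R_AbsRing) (V:=R_CompleteNormedModule) _ cc); [|exact ex_cc].
  intros n. change (norm (tt j n)) with (Rabs (tt j n)).
  destruct (tt_bounds j n). rewrite Rabs_pos_eq; lra.
Qed.

End Main.

Lemma Series_nonneg (w : nat -> R) : ex_series w -> (forall k, 0 <= w k) -> 0 <= Series w.
Proof.
  intros Hw Hpos.
  replace 0 with (Series (fun n => 0 * w n)).
  - apply Series_le; [|exact Hw]. intros n. specialize (Hpos n). lra.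
  - rewrite Series_scal_l. ring.
Qed.

Lemma ser_lt (u v : nat -> R) : ex_series u -> ex_series v ->
  (forall k, u k <= v k) -> u 1%nat < v 1%nat -> Series u < Series v.
Proof.
  intros Hu Hv Hle H1.
  set (w := fun n => v n - u n).
  assert (Hw : ex_series w).
  { apply (ex_series_ext (fun n => plus (v n) (opp (u n)))).
    - intros n. reflexivity.
    - apply (ex_series_minus (K:=R_AbsRing) (V:=R_NormedModule)); assumption. }
  assert (Hs : Series w = Series v - Series u) by (apply Series_minus; assumption).
  assert (Hw1 : ex_series (fun k => w (S k))) by (apply (proj1 (ex_series_incr_1 (K:=R_AbsRing) (V:=R_NormedModule) w)); exact Hw).
  assert (Hw2 : ex_series (fun k => w (S (S k)))) by (apply (proj1 (ex_series_incr_1 (K:=R_AbsRing) (V:=R_NormedModule) (fun k => w (S k)))); exact Hw1).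
  rewrite (Series_incr_1 _ Hw) in Hs. rewrite (Series_incr_1 _ Hw1) in Hs.
  assert (0 <= Series (fun k => w (S (S k)))).
  { apply Series_nonneg; [exact Hw2|]. intros k. unfold w. specialize (Hle (S (S k))). lra. }
  assert (0 <= w 0%nat) by (unfold w; specialize (Hle 0%nat); lra).
  assert (0 < w 1%nat) by (unfold w; lra).
  lra.
Qed.

Theorem mainTheorem5 (alpha gamma : R) :
  0 < alpha < 1 -> 0 < gamma ->
  let F := fun j : nat =>
    hyp2F1 gamma (INR j * gamma) (1 + INR j * gamma) alpha in
  F 0%nat = 1 /\
  (forall j : nat, F (S j) > F j) /\
  (forall j : nat, F j < Rpower (1 - alpha) (- gamma)).
Proof.
  intros Hal Hg F.
  assert (HF : forall j, F j = Series (tt gamma alpha j)) by (intros; reflexivity).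
  split; [|split].
  - rewrite HF.
    rewrite (Series_incr_1 _ (ex_tt gamma alpha Hal Hg 0)).
    unfold tt at 1. rewrite term0.
    rewrite (Series_ext _ (fun n => 0 * 0)).
    + rewrite Series_scal_l. ring.
    + intros n. unfold tt. rewrite termS by (try lra; apply bj_nonneg; lra).
      change (INR 0) with 0. rewrite Rmult_0_l. unfold Rdiv. ring.
  - intros j. rewrite !HF. apply ser_lt.
    + apply ex_tt; assumption.
    + apply ex_tt; assumption.
    + intros k. unfold tt. destruct k as [|m].
      * rewrite !term0. lra.
      * rewrite !termS by (try lra; apply bj_nonneg; lra).
        pose proof (cc_pos gamma alpha Hal Hg (S m)).
        assert (Hk : 0 < INR (S m)) by (apply lt_0_INR; lia).
        pose proof (frac_mono (INR j * gamma) (INR (S j) * gamma) (INR (S m))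
                      (bj_nonneg gamma Hg j) ltac:(rewrite S_INR; lra) Hk).
        nra.
    + unfold tt. rewrite !termS by (try lra; apply bj_nonneg; lra).
      pose proof (cc_pos gamma alpha Hal Hg 1).
      assert (Hk : 0 < INR 1) by (apply lt_0_INR; lia).
      pose proof (frac_mono (INR j * gamma) (INR (S j) * gamma) (INR 1)
                    (bj_nonneg gamma Hg j) ltac:(rewrite S_INR; lra) Hk).
      nra.
  - intros j. rewrite HF.
    apply Rlt_le_trans with (Series (cc gamma alpha)); [|apply Series_cc_le; assumption].
    apply ser_lt.
    + apply ex_tt; assumption.
    + apply ex_cc; assumption.
    + intros k. apply tt_bounds; assumption.
    + unfold tt. rewrite termS by (apply bj_nonneg; lra).
      pose proof (cc_pos gamma alpha Hal Hg 1).
      assert (Hk : 0 < INR 1) by (apply lt_0_INR; lia).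
      destruct (frac_bounds (INR j * gamma) (INR 1) (bj_nonneg gamma Hg j) Hk).
      nra.
Qed.
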